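(* Let \(a,b,c\) be positive integers and let \(m\) be a positive integer that is not a perfect square. Then \((a,\,b+c\sqrt m)\) spans \(1\) in \(\mathbb Z[\sqrt m]\) if and only if \((a,\,b^2-c^2m)\) spans \(1\) in \(\mathbb Z\), i.e. \(\gcd(a,b^2-c^2m)=1\).
   Context: \(\mathbb Z[\sqrt m]=\{u+v\sqrt m\mid u,v\in\mathbb Z\}\). For a commutative ring \(R\) with \(1\), a pair \((\alpha_1,\alpha_2)\) spans \(1\) in \(R\) if \(\lambda_1\alpha_1+\lambda_2\alpha_2=1\) for some \(\lambda_1,\lambda_2\in R\). *)

(* Defs.v *)
From Stdlib Require Import ZArith.
Open Scope Z_scope.

(* Elements u + v*sqrt m of Z[sqrt m], represented by the pair (u, v). *)
Record Zsqrt := mkZsqrt { re : Z; im : Z }.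

Definition zs_add (x y : Zsqrt) : Zsqrt :=
  mkZsqrt (re x + re y) (im x + im y).

(* (u1 + v1 sqrt m)(u2 + v2 sqrt m) = (u1 u2 + m v1 v2) + (u1 v2 + v1 u2) sqrt m *)
Definition zs_mul (m : Z) (x y : Zsqrt) : Zsqrt :=
  mkZsqrt (re x * re y + m * im x * im y) (re x * im y + im x * re y).

Definition zs_one : Zsqrt := mkZsqrt 1 0.

Definition spans1_Zsqrt (m : Z) (a1 a2 : Zsqrt) : Prop :=
  exists l1 l2 : Zsqrt, zs_add (zs_mul m l1 a1) (zs_mul m l2 a2) = zs_one.

Definition spans1_Z (x y : Z) : Prop :=
  exists l1 l2 : Z, l1 * x + l2 * y = 1.

Definition is_square (m : Z) : Prop := exists k : Z, k * k = m.

(* Main.v *)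
Require Import Defs.
From Stdlib Require Import ZArith Lia Znumtheory.
Open Scope Z_scope.

Theorem lemma1 (a b c m : Z) (ha : 0 < a) (hb : 0 < b) (hc : 0 < c)
  (hm : 0 < m) (hsq : ~ is_square m) :
  (spans1_Zsqrt m (mkZsqrt a 0) (mkZsqrt b c) <->
   spans1_Z a (b * b - c * c * m)) /\
  (spans1_Z a (b * b - c * c * m) <-> Z.gcd a (b * b - c * c * m) = 1).
Proof.
  split; split.
  - intros [[p q] [[r s] H]]. unfold zs_add, zs_mul, zs_one in H; simpl in H.
    injection H as H1 H2.
    exists (a*(p*p-m*q*q) + 2*((p*r-m*q*s)*b - m*(q*r-p*s)*c)), (r*r-m*s*s).
    assert (E : (a*(p*p-m*q*q) + 2*((p*r-m*q*s)*b - m*(q*r-p*s)*c)) * a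
       + (r*r-m*s*s) * (b*b-c*c*m)
       = (p*a + m*q*0 + (r*b + m*s*c))^2 - m*(p*0+q*a + (r*c+s*b))^2) by ring.
    rewrite E, H1, H2. ring.
  - intros [x [y H]]. exists (mkZsqrt x 0), (mkZsqrt (y*b) (-(y*c))).
    unfold zs_add, zs_mul, zs_one; simpl. f_equal; [rewrite <- H|]; ring.
  - intros [x [y H]]. apply Zis_gcd_gcd; [lia|].
    apply bezout_rel_prime. now constructor 1 with x y.
  - intros H. destruct (Z.gcd_bezout a (b*b-c*c*m) 1 H) as [x [y Hxy]].
    now exists x, y.
Qed.
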